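(* Let $H^T_{\mathbb{FC}}$ be the mapping on the running-time semantics of flowcharts defined in the context. Then $H^T_{\mathbb{FC}}$ is a verification functor: for all flowcharts $A,B$, $H^T_{\mathbb{FC}}([\![\mathsf{Seq}(A,B)]\!]) = H^T_{\mathbb{FC}}([\![B]\!])\circ H^T_{\mathbb{FC}}([\![A]\!])$, $H^T_{\mathbb{FC}}([\![\mathsf{Par}(A,B)]\!]) = H^T_{\mathbb{FC}}([\![A]\!])\times H^T_{\mathbb{FC}}([\![B]\!])$, and whenever $[\![A]\!]:\Sigma^{n}\uplus\Sigma^{k}\to\Sigma^{m}\uplus\Sigma^{k}$, for all $P:\Sigma^n\to\mathbb{N}^\infty$, $R:\Sigma^m\to\mathbb{N}^\infty$: $(P,R)\in H^T_{\mathbb{FC}}([\![\mathsf{Fb}(A)]\!])$ iff there is $Q:\Sigma^k\to\mathbb{N}^\infty$ with $((P,Q),(R,Q))\in H^T_{\mathbb{FC}}([\![A]\!])$.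
   Context: $\Sigma=\mathsf{Store}$ is the set of maps from program variables to $\mathbb{Z}$, and $\Sigma^n=\Sigma\uplus\dots\uplus\Sigma$ ($n$ summands). Flowcharts are built from basic flowcharts — identity, assignment $x:=t$, join $\Delta:\Sigma\uplus\Sigma\to\Sigma$, twist on $\Sigma\uplus\Sigma$, conditional fork $\mathrm{cond}_b:\Sigma\to\Sigma\uplus\Sigma$ (sending $\rho$ to the left summand if $\neg b_\rho$, to the right otherwise) — by sequential composition $\mathsf{Seq}$, parallel composition $\mathsf{Par}$ (disjoint union) and feedback $\mathsf{Fb}$ (the disjoint-union trace: iterate the flowchart, feeding outputs in the last summand back into the last input summand until an output lands in the first summands). The running time of a flowchart on a terminating input is the number of evaluations of non-neutral basic operations (every basic flowchart except identity and twist counts one step); the semantics $[\![A]\!]$ identifies two flowcharts iff they have the same input–output partial function and the same running time on all terminating inputs. $\mathbb{N}^\infty=\mathbb{N}\cup\{\infty\}$ with $n\le\infty$ and $n+\infty=\infty$. $H^T_{\mathbb{FC}}(\Sigma^n)$ is the set of functions $\Sigma^n\to\mathbb{N}^\infty$ (equivalently $n$-tuples of functions $\Sigma\to\mathbb{N}^\infty$, so $H^T_{\mathbb{FC}}(\Sigma^n\uplus\Sigma^m)=H^T_{\mathbb{FC}}(\Sigma^n)\times H^T_{\mathbb{FC}}(\Sigma^m)$), pre-ordered pointwise. For a flowchart $A$ with $[\![A]\!]:\Sigma^n\to\Sigma^m$ and $Q:\Sigma^m\to\mathbb{N}^\infty$, the relative running time $\mathsf{RRT}(A,Q):\Sigma^n\to\mathbb{N}^\infty$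 is $\infty$ at $\rho$ if $A$ does not terminate on $\rho$, and otherwise $\mathsf{RunTime}(A,\rho)+Q([\![A]\!](\rho))$. Define $(P,Q)\in H^T_{\mathbb{FC}}([\![A]\!])$ iff $P(\rho)\ge\mathsf{RRT}(A,Q)(\rho)$ for all $\rho$. Composition and product of relations are the usual relational ones. *)

(* Defs.v *)
From Stdlib Require Import ZArith ClassicalEpsilon.
From mathcomp Require Import all_boot.

Set Implicit Arguments.
Unset Strict Implicit.
Unset Printing Implicit Defensive.

Definition var := nat.
Definition Store := var -> Z.
Definition upd (s : Store) (x : var) (v : Z) : Store :=
  fun y => if y == x then v else s y.

(* An element of Sigma^n = Sigma (+) ... (+) Sigma is a pair (i, rho) with
   i : 'I_n the summand and rho : Store.  Sigma^n (+) Sigma^k is identified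
   with Sigma^(n+k) via lshift / rshift / split. *)

Inductive fc : nat -> nat -> Type :=
| FId     : fc 1 1
| FAssign : var -> (Store -> Z) -> fc 1 1
| FJoin   : fc 2 1
| FTwist  : fc 2 2
| FCond   : (Store -> bool) -> fc 1 2
| Seq     : forall n m p, fc n m -> fc m p -> fc n p
| Par     : forall n m n' m', fc n m -> fc n' m' -> fc (n + n') (m + m')
| Fb      : forall n m k, fc (n + k) (m + k) -> fc n m.

Definition twist (i : 'I_2) : 'I_2 := rev_ord i.

(* ---------- Operational (running-time) semantics ----------
   exec A i s j s' t : A started in summand i with store s terminates in
   output summand j with store s' after t non-neutral basic steps. *)
Inductive exec : forall n m, fc n m -> 'I_n -> Store -> 'I_m -> Store -> nat -> Prop :=
| exec_id : forall s, exec FId ord0 s ord0 s 0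
| exec_assign : forall x t s, exec (FAssign x t) ord0 s ord0 (upd s x (t s)) 1
| exec_join : forall (i : 'I_2) s, exec FJoin i s ord0 s 1
| exec_twist : forall (i : 'I_2) s, exec FTwist i s (twist i) s 0
| exec_cond : forall b s,
    exec (FCond b) ord0 s (if b s then ord_max else ord0) s 1
| exec_seq : forall n m p (A : fc n m) (B : fc m p) i s j s' t k s'' u,
    exec A i s j s' t -> exec B j s' k s'' u -> exec (Seq A B) i s k s'' (t + u)
| exec_parl : forall n m n' m' (A : fc n m) (B : fc n' m') i s j s' t,
    exec A i s j s' t -> exec (Par A B) (lshift n' i) s (lshift m' j) s' t
| exec_parr : forall n m n' m' (A : fc n m) (B : fc n' m') i s j s' t,
    exec B i s j s' t -> exec (Par A B) (rshift n i) s (rshift m j) s' t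
| exec_fb : forall n m k (A : fc (n + k) (m + k)) i s j s' t,
    fbrun A (lshift k i) s j s' t -> exec (Fb A) i s j s' t
(* iteration of the feedback loop: outputs in the last k summands are fed
   back into the last k input summands until an output lands in the first m *)
with fbrun : forall n m k, fc (n + k) (m + k) ->
                'I_(n + k) -> Store -> 'I_m -> Store -> nat -> Prop :=
| fb_done : forall n m k (A : fc (n + k) (m + k)) i s j s' t,
    exec A i s (lshift k j) s' t -> fbrun A i s j s' t
| fb_again : forall n m k (A : fc (n + k) (m + k)) i s l s' t j s'' u,
    exec A i s (rshift m l) s' t -> fbrun A (rshift n l) s' j s'' u ->
    fbrun A i s j s'' (t + u).

(* The semantics [[A]] : the input/output partial function together with the
   running time (a graph relation; it is functional). *)
Definition Sem (n m : nat) := 'I_n -> Store -> 'I_m -> Store -> nat -> Prop.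
Definition denote n m (A : fc n m) : Sem n m := @exec n m A.

Inductive ninf := Fin of nat | Inf.
Definition nadd (a b : ninf) : ninf :=
  match a, b with Fin x, Fin y => Fin (x + y)%N | _, _ => Inf end.
Definition nle (a b : ninf) : Prop :=
  match a, b with
  | _, Inf => True
  | Fin x, Fin y => (x <= y)%N
  | Inf, Fin _ => False
  end.

Definition pre (n : nat) := 'I_n -> Store -> ninf.

Definition RRT n m (f : Sem n m) (Q : pre m) (i : 'I_n) (s : Store) : ninf :=
  match excluded_middle_informative
          (exists r : 'I_m * Store * nat, f i s r.1.1 r.1.2 r.2) with
  | left h =>
      let r := proj1_sig (constructive_indefinite_description _ h) in
      nadd (Fin r.2) (Q r.1.1 r.1.2)
  | right _ => Inf
  end.

Definition HT n m (f : Sem n m) (P : pre n) (Q : pre m) : Prop :=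
  forall i s, nle (RRT f Q i s) (P i s).

Definition rel_comp n m p (R : pre n -> pre m -> Prop) (S : pre m -> pre p -> Prop)
  (P : pre n) (T : pre p) : Prop := exists Q, R P Q /\ S Q T.

(* H(Sigma^n (+) Sigma^k) = H(Sigma^n) x H(Sigma^k) *)
Definition pleft n k (P : pre (n + k)) : pre n := fun i => P (lshift k i).
Definition pright n k (P : pre (n + k)) : pre k := fun i => P (rshift n i).
Definition pjoin n k (P : pre n) (Q : pre k) : pre (n + k) :=
  fun i => match split i with inl j => P j | inr j => Q j end.

Definition rel_prod n m n' m' (R1 : pre n -> pre m -> Prop) (R2 : pre n' -> pre m' -> Prop)
  (P : pre (n + n')) (Q : pre (m + m')) : Prop :=
  R1 (pleft P) (pleft Q) /\ R2 (pright P) (pright Q).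

(* Main.v *)
Require Import Defs.
From mathcomp Require Import all_boot.
From Stdlib Require Import Eqdep_dec ClassicalEpsilon Relation_Operators Operators_Properties.
Set Implicit Arguments. Unset Strict Implicit.

Ltac inj1 := match goal with H : existT _ _ _ = existT _ _ _ |- _ =>
  apply inj_pair2_eq_dec in H; [|exact PeanoNat.Nat.eq_dec] end.
Ltac inv H := inversion H; repeat (first [progress subst | inj1]).

Lemma inv_seq n m p (A : fc n m) (B : fc m p) i s k s'' t :
  exec (Seq A B) i s k s'' t ->
  exists j s' t1 u, exec A i s j s' t1 /\ exec B j s' k s'' u /\ t = t1 + u.
Proof. intro H; inv H; eauto 10. Qed.

Lemma inv_par n m n' m' (A : fc n m) (B : fc n' m') i s o s' t :
  exec (Par A B) i s o s' t ->
  (exists i0 j, i = lshift n' i0 /\ o = lshift m' j /\ exec A i0 s j s' t) \/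
  (exists i0 j, i = rshift n i0 /\ o = rshift m j /\ exec B i0 s j s' t).
Proof. intro H; inv H; eauto 10. Qed.

Lemma inv_fb n m k (A : fc (n+k) (m+k)) i s j s' t :
  exec (Fb A) i s j s' t -> fbrun A (lshift k i) s j s' t.
Proof. intro H; inv H; auto. Qed.

Lemma inv_fbrun n m k (A : fc (n+k) (m+k)) x s j s' t :
  fbrun A x s j s' t ->
  exec A x s (lshift k j) s' t \/
  exists l s1 t1 u, exec A x s (rshift m l) s1 t1 /\ fbrun A (rshift n l) s1 j s' u /\ t = t1 + u.
Proof. intro H; inv H; eauto 10. Qed.

Lemma inv_id i s j s' t : exec FId i s j s' t -> j = i /\ s' = s /\ t = 0.
Proof. intro H; inv H. by []. Qed.
Lemma inv_assign x e i s j s' t : exec (FAssign x e) i s j s' t -> j = i /\ s' = upd s x (e s) /\ t = 1.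
Proof. intro H; inv H. by []. Qed.
Lemma inv_join i s j s' t : exec FJoin i s j s' t -> j = ord0 /\ s' = s /\ t = 1.
Proof. intro H; inv H. by []. Qed.
Lemma inv_twist i s j s' t : exec FTwist i s j s' t -> j = twist i /\ s' = s /\ t = 0.
Proof. intro H; inv H. by []. Qed.
Lemma inv_cond b i s j s' t : exec (FCond b) i s j s' t -> j = (if b s then ord_max else ord0) /\ s' = s /\ t = 1.
Proof. intro H; inv H. by []. Qed.
Definition detf n m (A: fc n m) := forall i s j s' t j2 s2 t2,
  exec A i s j s' t -> exec A i s j2 s2 t2 -> j2 = j /\ s2 = s' /\ t2 = t.
Definition zcf n m (A : fc n m) := forall i s j s',
  exec A i s j s' 0 -> s' = s /\ forall s2, exec A i s2 j s2 0.
Definition zuf n m (A: fc n m) := forall i s j s' i2 s2 s2' t2,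
  exec A i s j s' 0 -> exec A i2 s2 j s2' t2 -> i2 = i.

Lemma lr_neq a b (i : 'I_a) (j : 'I_b) : lshift b i <> rshift a j.
Proof. move=> E; have := eq_lrshift i j; by rewrite E eqxx. Qed.

Lemma fbrun_det n m k (A : fc (n+k) (m+k)) x s j s' t :
  fbrun A x s j s' t -> detf A -> forall j2 s2 t2, fbrun A x s j2 s2 t2 -> j2 = j /\ s2 = s' /\ t2 = t.
Proof.
elim => {n m k A x s j s' t}.
- move=> n m k A x s j s' t E dA j2 s2 t2 /inv_fbrun [E2|[l [s1 [t1 [u [E2 _]]]]]].
  + have [/lshift_inj -> [-> ->]] := dA _ _ _ _ _ _ _ _ E E2. by [].
  + have [/esym/lr_neq []] := dA _ _ _ _ _ _ _ _ E E2.
- move=> n m k A x s l s' t j s'' u E F IH dA j2 s2 t2 /inv_fbrun [E2|[l2 [s1 [t1 [u2 [E2 [F2 ->]]]]]]].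
  + have [/lr_neq []] := dA _ _ _ _ _ _ _ _ E E2.
  + have [/rshift_inj El [Es Et]] := dA _ _ _ _ _ _ _ _ E E2. subst.
    have [-> [-> ->]] := IH dA _ _ _ F2. by [].
Qed.

Lemma det_all n m (A : fc n m) : detf A.
Proof.
elim: A => {n m}.
- move=> i s j s' t j2 s2 t2 /inv_id [-> [-> ->]] /inv_id [-> [-> ->]]; done.
- move=> x e i s j s' t j2 s2 t2 /inv_assign [-> [-> ->]] /inv_assign [-> [-> ->]]; done.
- move=> i s j s' t j2 s2 t2 /inv_join [-> [-> ->]] /inv_join [-> [-> ->]]; done.
- move=> i s j s' t j2 s2 t2 /inv_twist [-> [-> ->]] /inv_twist [-> [-> ->]]; done.
- move=> b i s j s' t j2 s2 t2 /inv_cond [-> [-> ->]] /inv_cond [-> [-> ->]]; done.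
- move=> n m p A dA B dB i s j s' t j2 s2 t2 /inv_seq [o [s1 [t1 [u [E1 [F1 ->]]]]]]
    /inv_seq [o2 [s3 [t3 [u3 [E3 [F3 ->]]]]]].
  have [Eo [Es Et]] := dA _ _ _ _ _ _ _ _ E1 E3. subst.
  have [-> [-> ->]] := dB _ _ _ _ _ _ _ _ F1 F3. done.
- move=> n m n' m' A dA B dB i s j s' t j2 s2 t2
    /inv_par [[i0 [o [-> [-> E]]]]|[i0 [o [-> [-> E]]]]]
    /inv_par [[i1 [o1 [Ei [-> E1]]]]|[i1 [o1 [Ei [-> E1]]]]].
  + move/lshift_inj: Ei => Ei; subst. have [-> [-> ->]] := dA _ _ _ _ _ _ _ _ E E1. done.
  + by case: (lr_neq Ei).
  + by case: (lr_neq (esym Ei)).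
  + move/rshift_inj: Ei => Ei; subst. have [-> [-> ->]] := dB _ _ _ _ _ _ _ _ E E1. done.
- move=> n m k A dA i s j s' t j2 s2 t2 /inv_fb E /inv_fb E2.
  exact: (fbrun_det E dA E2).
Qed.

Lemma add0_inv a b : 0 = a + b -> a = 0 /\ b = 0.
Proof. by case: a; case: b. Qed.

Lemma fbrun_zc n m k (A : fc (n+k) (m+k)) x s j s' t :
  fbrun A x s j s' t -> zcf A -> t = 0 -> s' = s /\ forall s2, fbrun A x s2 j s2 0.
Proof.
elim => {n m k A x s j s' t}.
- move=> n m k A x s j s' t E zA t0; subst. have [-> H] := zA _ _ _ _ E.
  split => // s2; exact: fb_done (H s2).
- move=> n m k A x s l s' t j s'' u E F IH zA /esym/add0_inv [t0 u0]; subst.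
  have [-> H2] := IH zA erefl. have [-> H] := zA _ _ _ _ E.
  split => // s2. exact: (fb_again (H s2) (H2 s2)).
Qed.

Lemma zc_all n m (A : fc n m) : zcf A.
Proof.
elim: A => {n m}.
- move=> i s j s' /inv_id [-> [-> _]]; split => // s2. by rewrite ord1; constructor.
- by move=> x e i s j s' /inv_assign [_ [_ ]].
- by move=> i s j s' /inv_join [_ [_ ]].
- move=> i s j s' /inv_twist [-> [-> _]]; split => // s2. by constructor.
- by move=> b i s j s' /inv_cond [_ [_ ]].
- move=> n m p A dA B dB i s j s' /inv_seq [o [s1 [t1 [u [E1 [F1 /add0_inv [t0 u0]]]]]]].
  subst. have [-> H2] := dB _ _ _ _ F1. have [-> H1] := dA _ _ _ _ E1.
  split => // s2. exact: (exec_seq (H1 s2) (H2 s2)).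
- move=> n m n' m' A dA B dB i s j s' /inv_par [[i0 [o [-> [-> E]]]]|[i0 [o [-> [-> E]]]]].
  + have [-> H] := dA _ _ _ _ E; split => // s2; exact: exec_parl.
  + have [-> H] := dB _ _ _ _ E; split => // s2; exact: exec_parr.
- move=> n m k A dA i s j s' /inv_fb E.
  have [-> H] := fbrun_zc E dA erefl. split => // s2; exact: exec_fb.
Qed.

Inductive zplus n m k (A : fc (n+k) (m+k)) (y : 'I_(n+k)) : 'I_(n+k) -> Prop :=
| zp1 x l s : exec A x s (rshift m l) s 0 -> y = rshift n l -> zplus A y x
| zpS x l s : exec A x s (rshift m l) s 0 -> zplus A y (rshift n l) -> zplus A y x.

Lemma zplus_r n m k (A : fc (n+k) (m+k)) y x : zplus A y x -> exists l, y = rshift n l.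
Proof. elim => //; eauto. Qed.

Lemma zplus_last n m k (A : fc (n+k) (m+k)) l x : zplus A (rshift n l) x -> zuf A ->
  forall y sy s1 t, exec A y sy (rshift m l) s1 t -> x = y \/ zplus A y x.
Proof.
move E: (rshift n l) => z H; elim: H E => {x}.
- move=> x l' s Ex Ez E zA y sy s1 t Ey. rewrite Ez in E. move/rshift_inj: E => E; subst.
  left; exact: esym (zA _ _ _ _ _ _ _ _ Ex Ey).
- move=> x l' s Ex _ IH Ez zA y sy s1 t Ey.
  case: (IH Ez zA _ _ _ _ Ey) => [<-|H]; right.
  + exact: zp1 Ex erefl.
  + exact: zpS Ex H.
Qed.

Lemma FZ_done n m k (A : fc (n+k) (m+k)) x s j s' c :
  fbrun A x s j s' c -> zuf A -> zcf A -> c = 0 ->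
  forall y sy e t, exec A y sy (lshift k j) e t -> x = y \/ zplus A y x.
Proof.
elim => {n m k A x s j s' c}.
- move=> n m k A x s j s' c E zu zc c0 y sy e t Ey; subst. left; exact: esym (zu _ _ _ _ _ _ _ _ E Ey).
- move=> n m k A x s l s' t j s'' u E F IH zu zc /esym/add0_inv [t0 u0] y sy e t2 Ey; subst.
  have [Es _] := zc _ _ _ _ E; subst.
  case: (IH zu zc erefl _ _ _ _ Ey) => [<-|H]; right.
  + exact: zp1 E erefl.
  + exact: zpS E H.
Qed.

Lemma FZ n m k (A : fc (n+k) (m+k)) y sy j e t :
  fbrun A y sy j e t -> zuf A -> zcf A ->
  forall x s s', fbrun A x s j s' 0 -> x = y \/ zplus A y x \/ exists l, x = rshift n l.
Proof.
elim => {n m k A y sy j e t}.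
- move=> n m k A y sy j e t Ey zu zc x s s' F.
  case: (FZ_done F zu zc erefl Ey); tauto.
- move=> n m k A y sy l s1 t j e u Ey F IH zu zc x s s' Fx.
  case: (IH zu zc _ _ _ Fx) => [->|[H|H]]; [by eauto| |by eauto].
  case: (zplus_last H zu Ey); tauto.
Qed.

Lemma zu_all n m (A : fc n m) : zuf A.
Proof.
elim: A => {n m}.
- move=> i s j s' i2 s2 s2' t2 _ _. by rewrite (ord1 i) (ord1 i2).
- by move=> x e i s j s' i2 s2 s2' t2 /inv_assign [_ [_ ]].
- by move=> i s j s' i2 s2 s2' t2 /inv_join [_ [_ ]].
- move=> i s j s' i2 s2 s2' t2 /inv_twist [-> _] /inv_twist [E _].
  move: E; rewrite /twist => /rev_ord_inj. done.
- by move=> b i s j s' i2 s2 s2' t2 /inv_cond [_ [_ ]].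
- move=> n m p A dA B dB i s j s' i2 s2 s2' t2 /inv_seq [o [s1 [t1 [u [E1 [F1 /add0_inv [t0 u0]]]]]]]
    /inv_seq [o2 [s3 [t3 [u3 [E3 [F3 _]]]]]]. subst.
  have Eo := dB _ _ _ _ _ _ _ _ F1 F3. subst.
  exact: (dA _ _ _ _ _ _ _ _ E1 E3).
- move=> n m n' m' A dA B dB i s j s' i2 s2 s2' t2
    /inv_par [[i0 [o [-> [-> E]]]]|[i0 [o [-> [-> E]]]]]
    /inv_par [[i1 [o1 [-> [Eo E1]]]]|[i1 [o1 [-> [Eo E1]]]]].
  + move/lshift_inj: Eo => Eo; subst. by rewrite (dA _ _ _ _ _ _ _ _ E E1).
  + by case: (lr_neq Eo).
  + by case: (lr_neq (esym Eo)).
  + move/rshift_inj: Eo => Eo; subst. by rewrite (dB _ _ _ _ _ _ _ _ E E1).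
- move=> n m k A dA i s j s' i2 s2 s2' t2 /inv_fb E /inv_fb E2.
  case: (FZ E2 dA (@zc_all _ _ A) E) => [/lshift_inj //|[/zplus_r [l /lr_neq []]|[l /lr_neq []]]].
Qed.

Definition detS n m (f : Sem n m) (i : 'I_n) s := forall j s' t j2 s2 t2,
  f i s j s' t -> f i s j2 s2 t2 -> j2 = j /\ s2 = s' /\ t2 = t.

Lemma RRT_case n m (f : Sem n m) Q i s : detS f i s ->
 (exists j s' t, f i s j s' t /\ RRT f Q i s = nadd (Fin t) (Q j s')) \/
 ((forall j s' t, ~ f i s j s' t) /\ RRT f Q i s = Inf).
Proof.
move=> D; rewrite /RRT; case: excluded_middle_informative => h.
- left. case: (constructive_indefinite_description _ h) => [[[j s'] t] /= H].
  by exists j, s', t.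
- right; split => // j s' t H; apply: h; by exists (j, s', t).
Qed.

Lemma detS_exec n m (A : fc n m) i s : detS (denote A) i s.
Proof. move=> j s' t j2 s2 t2 E1 E2; exact: (det_all E1 E2). Qed.

Arguments detS_exec {n m} A i s.
Lemma detS_fbrun n m k (A : fc (n+k) (m+k)) x s : detS (fbrun A) x s.
Proof. move=> j s' t j2 s2 t2 E1 E2; exact: (fbrun_det E1 (@det_all _ _ A) E2). Qed.

Arguments detS_fbrun {n m k} A x s.
Lemma nle_refl a : nle a a.
Proof. by case: a => //= x. Qed.
Lemma nle_trans a b c : nle a b -> nle b c -> nle a c.
Proof. case: a; case: b; case: c => //= x y z; exact: leq_trans. Qed.
Lemma nadd_mono t a b : nle a b -> nle (nadd (Fin t) a) (nadd (Fin t) b).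
Proof. case: a; case: b => //= x y; by rewrite leq_add2l. Qed.
Lemma nadd_assoc t u v : nadd (Fin t) (nadd (Fin u) v) = nadd (Fin (t + u)) v.
Proof. case: v => //= x; by rewrite addnA. Qed.

Lemma RRT_mono n m (f : Sem n m) Q Q' i s :
  (forall j s, nle (Q j s) (Q' j s)) -> nle (RRT f Q i s) (RRT f Q' i s).
Proof.
move=> H; rewrite /RRT; case: excluded_middle_informative => h //=.
exact: nadd_mono.
Qed.

Lemma RRT_seq n m p (A : fc n m) (B : fc m p) R i s :
  RRT (denote (Seq A B)) R i s = RRT (denote A) (RRT (denote B) R) i s.
Proof.
case: (RRT_case (RRT (denote B) R) (detS_exec A i s)) => [[j [s1 [t [E ->]]]]|[N ->]].
- case: (RRT_case R (detS_exec B j s1)) => [[k [s2 [u [F ->]]]]|[NB ->]].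
  + rewrite nadd_assoc.
    case: (RRT_case R (detS_exec (Seq A B) i s)) => [[k' [s3 [u' [G ->]]]]|[NS _]].
    * have [-> [-> ->]] := det_all (exec_seq E F) G. done.
    * by case: (NS _ _ _ (exec_seq E F)).
  + case: (RRT_case R (detS_exec (Seq A B) i s)) => [[k' [s3 [u' [G _]]]]|[_ ->]] //.
    move: G => /inv_seq [j2 [s4 [t1 [u1 [E2 [F2 _]]]]]].
    have [Ej [Es _]] := det_all E E2. subst. by case: (NB _ _ _ F2).
- case: (RRT_case R (detS_exec (Seq A B) i s)) => [[k' [s3 [u' [G _]]]]|[_ ->]] //.
  move: G => /inv_seq [j2 [s4 [t1 [u1 [E2 _]]]]]. by case: (N _ _ _ E2).
Qed.

Lemma RRT_parl n m n' m' (A : fc n m) (B : fc n' m') R i s :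
  RRT (denote (Par A B)) R (lshift n' i) s = RRT (denote A) (pleft R) i s.
Proof.
case: (RRT_case (pleft R) (detS_exec A i s)) => [[j [s1 [t [E ->]]]]|[N ->]].
- case: (RRT_case R (detS_exec (Par A B) (lshift n' i) s)) => [[o [s3 [u [G ->]]]]|[NS _]].
  + have [-> [-> ->]] := det_all (exec_parl B E) G. done.
  + by case: (NS _ _ _ (exec_parl B E)).
- case: (RRT_case R (detS_exec (Par A B) (lshift n' i) s)) => [[o [s3 [u [G _]]]]|[_ ->]] //.
  move: G => /inv_par [[i0 [o0 [/lshift_inj Ei [_ E]]]]|[i0 [o0 [E _]]]].
  + subst; by case: (N _ _ _ E).
  + by case: (lr_neq E).
Qed.

Lemma RRT_parr n m n' m' (A : fc n m) (B : fc n' m') R i s :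
  RRT (denote (Par A B)) R (rshift n i) s = RRT (denote B) (pright R) i s.
Proof.
case: (RRT_case (pright R) (detS_exec B i s)) => [[j [s1 [t [E ->]]]]|[N ->]].
- case: (RRT_case R (detS_exec (Par A B) (rshift n i) s)) => [[o [s3 [u [G ->]]]]|[NS _]].
  + have [-> [-> ->]] := det_all (exec_parr A E) G. done.
  + by case: (NS _ _ _ (exec_parr A E)).
- case: (RRT_case R (detS_exec (Par A B) (rshift n i) s)) => [[o [s3 [u [G _]]]]|[_ ->]] //.
  move: G => /inv_par [[i0 [o0 [E _]]]|[i0 [o0 [/rshift_inj Ei [_ E]]]]].
  + by case: (lr_neq (esym E)).
  + subst; by case: (N _ _ _ E).
Qed.

Lemma pjoin_l a b (P : pre a) (Q : pre b) i s : pjoin P Q (lshift b i) s = P i s.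
Proof. rewrite /pjoin. have -> : lshift b i = unsplit (inl i) by []. by rewrite unsplitK. Qed.
Lemma pjoin_r a b (P : pre a) (Q : pre b) i s : pjoin P Q (rshift a i) s = Q i s.
Proof. rewrite /pjoin. have -> : rshift a i = unsplit (inr i) by []. by rewrite unsplitK. Qed.

Lemma RRT_fb n m k (A : fc (n+k) (m+k)) R i s :
  RRT (denote (Fb A)) R i s = RRT (fbrun A) R (lshift k i) s.
Proof.
case: (RRT_case R (detS_fbrun A (lshift k i) s)) => [[j [s1 [t [E ->]]]]|[N ->]].
- case: (RRT_case R (detS_exec (Fb A) i s)) => [[o [s3 [u [G ->]]]]|[NS _]].
  + have [-> [-> ->]] := det_all (exec_fb E) G. done.
  + by case: (NS _ _ _ (exec_fb E)).
- case: (RRT_case R (detS_exec (Fb A) i s)) => [[o [s3 [u [G _]]]]|[_ ->]] //.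
  by case: (N _ _ _ (inv_fb G)).
Qed.

Lemma RRT_fbA n m k (A : fc (n+k) (m+k)) R x s :
  RRT (denote A) (pjoin R (fun l s => RRT (fbrun A) R (rshift n l) s)) x s
  = RRT (fbrun A) R x s.
Proof.
case: (RRT_case (pjoin R (fun l s => RRT (fbrun A) R (rshift n l) s)) (detS_exec A x s))
  => [[o [s1 [t [E ->]]]]|[N ->]].
- move: E; rewrite -(splitK o); case: (split o) => a E.
  + change (unsplit (inl a)) with (lshift k a) in *. rewrite (pjoin_l R). have F := fb_done E.
    case: (RRT_case R (detS_fbrun A x s)) => [[j [s3 [u [G ->]]]]|[NS _]].
    * have [-> [-> ->]] := fbrun_det F (@det_all _ _ A) G. done.
    * by case: (NS _ _ _ F).
  + change (unsplit (inr a)) with (rshift m a) in *. rewrite (pjoin_r R).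
    case: (RRT_case R (detS_fbrun A (rshift n a) s1)) => [[j [s3 [u [G ->]]]]|[NB ->]].
    * rewrite nadd_assoc. have F := fb_again E G.
      case: (RRT_case R (detS_fbrun A x s)) => [[j' [s4 [u' [G' ->]]]]|[NS _]].
      -- have [-> [-> ->]] := fbrun_det F (@det_all _ _ A) G'. done.
      -- by case: (NS _ _ _ F).
    * case: (RRT_case R (detS_fbrun A x s)) => [[j' [s4 [u' [G' _]]]]|[_ ->]] //.
      move: G' => /inv_fbrun [E2|[l [s5 [t1 [u1 [E2 [F2 _]]]]]]].
      -- have [/lr_neq []] := det_all E E2.
      -- have [/rshift_inj El [Es _]] := det_all E E2. subst. by case: (NB _ _ _ F2).
- case: (RRT_case R (detS_fbrun A x s)) => [[j' [s4 [u' [G' _]]]]|[_ ->]] //.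
  move: G' => /inv_fbrun [E2|[l [s5 [t1 [u1 [E2 _]]]]]]; by case: (N _ _ _ E2).
Qed.

Lemma L1 n m k (A : fc (n+k) (m+k)) x s j s' t :
  fbrun A x s j s' t -> forall (P : pre n) (Q : pre k) (R : pre m),
  HT (denote A) (pjoin P Q) (pjoin R Q) -> nle (nadd (Fin t) (R j s')) (pjoin P Q x s).
Proof.
elim => {n m k A x s j s' t}.
- move=> n m k A x s j s' t E P Q R HA.
  have := HA x s. case: (RRT_case (pjoin R Q) (detS_exec A x s)) => [[o [s1 [t1 [E1 ->]]]]|[N _]].
  + have [-> [-> ->]] := det_all E E1. by rewrite pjoin_l.
  + by case: (N _ _ _ E).
- move=> n m k A x s l s' t j s'' u E F IH P Q R HA.
  have := HA x s. case: (RRT_case (pjoin R Q) (detS_exec A x s)) => [[o [s1 [t1 [E1 ->]]]]|[N _]].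
  + have [-> [-> ->]] := det_all E E1. rewrite pjoin_r => H.
    rewrite -nadd_assoc. apply: nle_trans H. apply: nadd_mono.
    have := IH P Q R HA. by rewrite pjoin_r.
  + by case: (N _ _ _ E).
Qed.

Definition zstep n m k (A : fc (n+k) (m+k)) (l l' : 'I_k) :=
  exists s, exec A (rshift n l) s (rshift m l') s 0.
Definition zreach n m k (A : fc (n+k) (m+k)) := clos_refl_trans _ (zstep A).
Definition zcyc n m k (A : fc (n+k) (m+k)) l := exists l', zstep A l l' /\ zreach A l' l.

Lemma zcyc_pred n m k (A : fc (n+k) (m+k)) l y s s' t :
  zcyc A l -> exec A y s (rshift m l) s' t -> exists c, y = rshift n c /\ zcyc A c.
Proof.
move=> [l1 [Hs Hr0]] Ey. have Hr := clos_rt_rtn1 _ _ _ _ Hr0. clear Hr0.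
revert Ey Hs; destruct Hr as [|c z Hcz Hr].
- move=> Ey [s0 E0]. have Ey' := zu_all E0 Ey. exists l1; split => //.
  exists l1; split; [by exists s0|exact: rt_refl].
- move=> Ey [s0 E0]. case: Hcz => s1 E1. have Ey' := zu_all E1 Ey.
  exists c; split => //. exists z; split; first by exists s1.
  apply: rt_trans (rt_step _ _ _ _ _) (clos_rtn1_rt _ _ _ _ Hr). by exists s0.
Qed.

Definition zb n m k (A : fc (n+k) (m+k)) l l' : bool :=
  if excluded_middle_informative (zreach A l l') then true else false.
Lemma zbP n m k (A : fc (n+k) (m+k)) l l' : zb A l l' <-> zreach A l l'.
Proof. rewrite /zb; case: excluded_middle_informative => h; split => //. Qed.

Definition rs n m k (A : fc (n+k) (m+k)) l := [set l' | zb A l l'].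

Lemma rs_lt n m k (A : fc (n+k) (m+k)) l l' :
  zstep A l l' -> ~ zcyc A l -> #|rs A l'| < #|rs A l|.
Proof.
move=> H nc. apply: proper_card. apply/properP; split.
- apply/subsetP => z; rewrite !inE => /zbP Hz; apply/zbP.
  exact: rt_trans (rt_step _ _ _ _ H) Hz.
- exists l; rewrite inE; first by apply/zbP; exact: rt_refl.
  apply/negP => /zbP Hr; apply: nc; by exists l'.
Qed.

Lemma L2 n m k (A : fc (n+k) (m+k)) (P : pre n) (Q : pre k) (R : pre m) :
  HT (denote A) (pjoin P Q) (pjoin R Q) ->
  forall N l s, Q l s = Fin N -> ~ zcyc A l ->
  exists j s' t, fbrun A (rshift n l) s j s' t.
Proof.
move=> HA N; elim/ltn_ind: N => N IHN.
suff H : forall c l s, #|rs A l| = c -> Q l s = Fin N -> ~ zcyc A l ->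
  exists j s' t, fbrun A (rshift n l) s j s' t by move=> l s; exact: H.
move=> c; elim/ltn_ind: c => c IHc l s Ec EQ nc.
have := HA (rshift n l) s. rewrite pjoin_r EQ.
case: (RRT_case (pjoin R Q) (detS_exec A (rshift n l) s)) => [[o [s1 [t [E ->]]]]|[_ ->]] //.
move: E; rewrite -(splitK o); case: (split o) => a E.
- change (unsplit (inl a)) with (lshift k a) in *. move=> _.
  exists a, s1, t; exact: fb_done E.
- change (unsplit (inr a)) with (rshift m a) in *. rewrite pjoin_r.
  case EQa: (Q a s1) => [N'|] //= Hle.
  have nca : ~ zcyc A a.
    move=> ca; case: (zcyc_pred ca E) => c0 [/rshift_inj <- ]; exact: nc.
  suff [j [s'' [u F]]] : exists j s' t, fbrun A (rshift n a) s1 j s' t.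
    exists j, s'', (t + u); exact: fb_again E F.
  case: (ltnP N' N) => hN.
  + exact: (IHN N' hN a s1 EQa nca).
  + have t0 : t = 0 by move: Hle hN; clear; move=> h1 h2; apply/eqP; rewrite -leqn0 -(leq_add2r N'); apply: leq_trans h1 _; rewrite add0n.
    have eN : N' = N by apply/eqP; rewrite eqn_leq hN andbT; apply: leq_trans Hle; rewrite leq_addl.
    subst. have [Es _] := zc_all E. subst.
    have st : zstep A l a by exists s.
    exact: (IHc _ (rs_lt st nc) a s erefl EQa nca).
Qed.

Theorem theorem4p3 :
  (forall n m p (A : fc n m) (B : fc m p) (P : pre n) (R : pre p),
      HT (denote (Seq A B)) P R <-> rel_comp (HT (denote A)) (HT (denote B)) P R)
  /\
  (forall n m n' m' (A : fc n m) (B : fc n' m') (P : pre (n + n')) (R : pre (m + m')),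
      HT (denote (Par A B)) P R <-> rel_prod (HT (denote A)) (HT (denote B)) P R)
  /\
  (forall n m k (A : fc (n + k) (m + k)) (P : pre n) (R : pre m),
      HT (denote (Fb A)) P R <->
      exists Q : pre k, HT (denote A) (pjoin P Q) (pjoin R Q)).
Proof.
split; [|split].
- move=> n m p A B P R; split.
  + move=> H. exists (RRT (denote B) R); split.
    * move=> i s; rewrite -RRT_seq; exact: H.
    * move=> i s; exact: nle_refl.
  + move=> [Q [HA HB]] i s. rewrite RRT_seq.
    apply: nle_trans (HA i s). exact: RRT_mono.
- move=> n m n' m' A B P R; split.
  + move=> H; split => i s.
    * rewrite -(RRT_parl A B); exact: H.
    * rewrite -(RRT_parr A B); exact: H.
  + move=> [HA HB] x s. rewrite -(splitK x); case: (split x) => a.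
    * change (unsplit (inl a)) with (lshift n' a). rewrite RRT_parl; exact: HA.
    * change (unsplit (inr a)) with (rshift n a). rewrite RRT_parr; exact: HB.
- move=> n m k A P R; split.
  + move=> H. exists (fun l s => RRT (fbrun A) R (rshift n l) s) => x s.
    rewrite RRT_fbA. rewrite -(splitK x); case: (split x) => a.
    * change (unsplit (inl a)) with (lshift k a). rewrite pjoin_l -RRT_fb; exact: H.
    * change (unsplit (inr a)) with (rshift n a). rewrite pjoin_r; exact: nle_refl.
  + move=> [Q HA] i s. rewrite RRT_fb.
    case: (RRT_case R (detS_fbrun A (lshift k i) s)) => [[j [s1 [t [F ->]]]]|[NF ->]].
    * have := L1 F HA. by rewrite pjoin_l.
    * case EP: (P i s) => [N|] //=.
      have := HA (lshift k i) s. rewrite pjoin_l EP.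
      case: (RRT_case (pjoin R Q) (detS_exec A (lshift k i) s)) => [[o [s1 [t [E ->]]]]|[_ ->]] //.
      move: E; rewrite -(splitK o); case: (split o) => a E.
      -- change (unsplit (inl a)) with (lshift k a) in *. move=> _.
         by case: (NF _ _ _ (fb_done E)).
      -- change (unsplit (inr a)) with (rshift m a) in *. rewrite pjoin_r.
         case EQa: (Q a s1) => [N'|] //= _.
         have nca : ~ zcyc A a.
           move=> ca; case: (zcyc_pred ca E) => c0 [/lr_neq []].
         have [j [s'' [u F]]] := L2 HA EQa nca.
         by case: (NF _ _ _ (fb_again E F)).
Qed.
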